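(* Let $L>0$ and let $\phi$ satisfy (H_φ) with $\phi(0)=+\infty$. Let $u\in H^1_0(0,L)$ with $\phi(u)\in L^2(0,L)$. If $\int_0^{\delta}\phi(t)\,dt=+\infty$ for every $\delta\in(0,1)$, then $u(x)\le0$ for all $x\in[0,L]$. If $\int_{-\delta}^0\phi(t)\,dt=+\infty$ for every $\delta\in(0,1)$, then $u(x)\ge0$ for all $x\in[0,L]$.
   Context: (H_φ): $\phi:\mathbb{R}\to\mathbb{R}\cup\{+\infty\}$ is continuous when $\mathbb{R}\cup\{+\infty\}$ carries its usual topology, and $\phi(s)<+\infty$ for every $s\neq0$. Functions in $H^1_0(0,L)$ are identified with their continuous representatives. *)

(* Defs.v *)
From HB Require Import structures.
From mathcomp Require Import all_boot all_order all_algebra.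
From mathcomp Require Import all_classical all_reals all_analysis measurable_realfun.
Set Implicit Arguments. Unset Strict Implicit. Unset Printing Implicit Defensive.
Import Order.TTheory GRing.Theory Num.Theory.
Import numFieldNormedType.Exports.
Local Open Scope classical_set_scope.
Local Open Scope ring_scope.

(* (H_phi): phi : R -> R ∪ {+oo}, continuous for the usual topology of
   R ∪ {+oo} (the subspace topology of \bar R), finite off 0. *)
Definition H_phi (R : realType) (phi : R -> \bar R) : Prop :=
  continuous phi /\ (forall s, phi s != -oo%E) /\
  (forall s, s != 0 -> phi s \is a fin_num).

(* H^1_0(0,L), identified with continuous representatives on [0,L]:
   u is absolutely continuous on [0,L], u(x) = \int_0^x g with g ∈ L^2(0,L),
   and u(0) = u(L) = 0. *)
Definition H10 (R : realType) (L : R) (u : R -> R) : Prop :=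
  exists g : R -> R,
    measurable_fun `[0, L] g /\
    (\int[lebesgue_measure]_(x in `[0%R, L]) (g x * g x)%:E < +oo)%E /\
    (forall x, 0 <= x <= L ->
       ((u x)%:E = \int[lebesgue_measure]_(t in `[0%R, x]) (g t)%:E)%E) /\
    u L = 0.

Definition L2_comp (R : realType) (L : R) (phi : R -> \bar R) (u : R -> R) : Prop :=
  measurable_fun `[0%R, L] (phi \o u : R -> \bar R) /\
  (\int[lebesgue_measure]_(x in `[0%R, L]) (phi (u x) * phi (u x)) < +oo)%E.

(* Main.v *)
Require Import Defs.
From HB Require Import structures.
From mathcomp Require Import all_boot all_order all_algebra.
From mathcomp Require Import all_classical all_reals all_analysis measurable_realfun.
From mathcomp Require Import lra.
Import Order.TTheory GRing.Theory Num.Theory.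
Import numFieldNormedType.Exports.
Local Open Scope classical_set_scope.
Local Open Scope ring_scope.
Section S.
Context {R : realType}.

Lemma cont_ind (H : R -> R) (a b : R) : a <= b ->
  (forall y, a <= y <= b -> exists2 r, 0 < r &
     forall z, a <= z <= b -> `|z - y| < r ->
       (z <= y -> H y <= H z) /\ (y <= z -> H z <= H y)) ->
  H b <= H a.
Proof.
move=> ab loc.
pose T := [set y | a <= y <= b /\ forall z, a <= z <= y -> H z <= H a].
have Ta : T a.
  split; first by rewrite lexx ab.
  by move=> z /andP[az za]; have -> : z = a by apply/eqP; rewrite eq_le az za.
have hsT : has_sup T by split; [exists a | exists b => y [/andP[_ ->]]].
pose m := sup T.
have am : a <= m by apply: sup_upper_bound.
have mb : m <= b by apply: ge_sup; [exists a | move=> y [/andP[_ ->]]].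
have below : forall z, a <= z < m -> H z <= H a.
  move=> z /andP[az zm].
  have mz0 : 0 < m - z by rewrite subr_gt0.
  have [t [/andP[_ tb] Ht] mt] := sup_adherent mz0 hsT.
  rewrite opprB addrC subrK in mt.
  by apply: Ht; rewrite az ltW.
have [r r0 Hr] := loc m (introT andP (conj am mb)).
have Hm : H m <= H a.
  have [ma|ma] := eqVneq m a; first by rewrite ma.
  have am' : a < m by rewrite lt_neqAle eq_sym ma am.
  pose z := Num.max a (m - r / 2).
  have az : a <= z by rewrite le_max lexx.
  have zm : z < m by rewrite gt_max am' /=; lra.
  have zr : `|z - m| < r.
    rewrite ltr0_norm ?subr_lt0 // opprB.
    have : m - r/2 <= z by rewrite le_max lexx orbT.
    lra.
  have [+ _] := Hr z (introT andP (conj az (ltW (lt_le_trans zm mb)))) zr.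
  move=> /(_ (ltW zm)) Hmz; apply: le_trans Hmz _.
  by apply: below; rewrite az zm.
have [mb'|mb'] := eqVneq m b; first by rewrite -mb'.
have mlb : m < b by rewrite lt_neqAle mb' mb.
pose z := Num.min b (m + r / 2).
have mz : m < z by rewrite lt_min mlb /=; lra.
have zb : z <= b by rewrite ge_min lexx.
have Tz : T z.
  split; first by rewrite zb (le_trans am (ltW mz)).
  move=> w /andP[aw wz].
  case: (ltgtP w m) => [wm'|mw|->]; last exact: Hm.
    by apply: below; rewrite aw wm'.
  have wr : `|w - m| < r.
    rewrite gtr0_norm ?subr_gt0 //.
    have : w <= m + r/2 by apply: (le_trans wz); rewrite ge_min lexx orbT.
    lra.
  have [_ +] := Hr w (introT andP (conj aw (le_trans wz zb))) wr.
  by move=> /(_ (ltW mw)) Hwm; apply: le_trans Hwm Hm.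
have := sup_upper_bound hsT Tz; rewrite -/m => zm.
by have := lt_le_trans mz zm; rewrite ltxx.
Qed.
End S.
Section S.
Context {R : realType}.
Notation mu := (@lebesgue_measure R).

Lemma within_eps (f : R -> R) (A : set R) y : {within A, continuous f} -> A y ->
  forall e, 0 < e -> exists2 r, 0 < r & forall z, A z -> `|z - y| < r -> `|f z - f y| < e.
Proof.
move=> cf Ay e e0.
have := (subspace_continuousP A f).1 cf y Ay.
move/cvgrPdist_lt/(_ e e0) => /nbhs_ballP[r r0 H].
exists r => // z Az zy; rewrite distrC; apply: H => //.
by rewrite /ball /= distrC.
Qed.

Lemma at_eps (f : R -> R) y : {for y, continuous f} ->
  forall e, 0 < e -> exists2 r, 0 < r & forall z, `|z - y| < r -> `|f z - f y| < e.
Proof.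
move=> cf e e0.
move: cf => /cvgrPdist_lt/(_ e e0) /nbhs_ballP[r r0 H].
exists r => // z zy; rewrite distrC; apply: H => //.
by rewrite /ball /= distrC.
Qed.

Lemma fine_cont (phi : R -> \bar R) t : {for t, continuous phi} -> phi t \is a fin_num ->
  {for t, continuous (fun z => fine (phi z))}.
Proof.
move=> cp ft.
have : phi z @[z --> t] --> (fine (phi t))%:E by rewrite fineK.
by move/fine_cvg.
Qed.

Lemma Rint_split (f : R -> R) a z b : a <= z -> z <= b ->
  mu.-integrable `[a, b] (EFin \o f) ->
  \int[mu]_(t in `[a, b]) f t - \int[mu]_(t in `[a, z]) f t = \int[mu]_(t in `[z, b]) f t.
Proof.
move=> az zb intf.
rewrite (Rintegral_itvB intf) ?bnd_simp //.
rewrite Rintegral_itv_obnd_cbnd //.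
apply: integrableS intf => //.
by apply: subset_itvr; rewrite bnd_simp.
Qed.
End S.
Section S.
Context {R : realType}.
Definition clamp (s c p : R) := Num.min (Num.max p s) c.

Lemma clamp_lo s c p : s <= c -> p <= s -> clamp s c p = s.
Proof. by move=> sc ps; rewrite /clamp max_r // min_l. Qed.
Lemma clamp_hi s c p : s <= c -> c <= p -> clamp s c p = c.
Proof. by move=> sc cp; rewrite /clamp max_l ?(le_trans sc) // min_r. Qed.
Lemma clamp_mid s c p : s <= p -> p <= c -> clamp s c p = p.
Proof. by move=> sp pc; rewrite /clamp max_l // min_l. Qed.

Lemma clamp_cases s c p : s <= c ->
  [\/ p <= s /\ clamp s c p = s, c <= p /\ clamp s c p = c |
      (s <= p <= c) /\ clamp s c p = p].
Proof.
move=> sc; have [ps|sp] := leP p s; first by apply: Or31; rewrite clamp_lo.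
have [cp|pc] := leP c p; first by apply: Or32; rewrite clamp_hi.
by apply: Or33; rewrite clamp_mid ?ltW ?(ltW sp) ?(ltW pc).
Qed.

Lemma clamp_in s c p : s <= c -> s <= clamp s c p <= c.
Proof.
move=> sc; case: (clamp_cases s c p sc) => -[h ->]; rewrite ?lexx ?sc //.
Qed.

Lemma clamp_lip s c p q : s <= c -> `|clamp s c q - clamp s c p| <= `|q - p|.
Proof.
move=> sc; have h1 := ler_norm (q - p); have h2 := ler_norm (p - q).
rewrite distrC in h2.
case: (clamp_cases s c p sc) => -[hp ->]; case: (clamp_cases s c q sc) => -[hq ->];
  rewrite ler_norml; try case/andP: hp => hp1 hp2; try case/andP: hq => hq1 hq2;
  apply/andP; split; lra.
Qed.
End S.
Section S.
Context {R : realType}.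
Notation mu := (@lebesgue_measure R).

Lemma core (phi : R -> \bar R) (u g : R -> R) (x s c : R) :
  0 < s -> s < c -> 0 <= x ->
  (forall t, s <= t <= c ->
     [/\ {for t, continuous phi}, phi t \is a fin_num & (0 <= phi t)%E]) ->
  (forall y, `[0, x]%classic y -> forall e, 0 < e -> exists2 r, 0 < r &
     forall z, `[0, x]%classic z -> `|z - y| < r -> `|u z - u y| < e) ->
  u 0 = 0 -> c <= u x ->
  (forall y1 y2, 0 <= y1 -> y1 <= y2 -> y2 <= x ->
     `|u y2 - u y1| <= \int[mu]_(t in `[y1, y2]) `|g t|) ->
  mu.-integrable `[0, x] (EFin \o g) ->
  mu.-integrable `[0, x] (EFin \o (fun z => (`|fine (phi (u z))| + 1) * `|g z|)) ->
  \int[mu]_(t in `[s, c]) fine (phi t) <=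
  \int[mu]_(z in `[0, x]) ((`|fine (phi (u z))| + 1) * `|g z|).
Proof.
move=> s0 sc x0 phiP cu u0 ucx ulip intg intk.
set f := fun t => fine (phi t).
set k := fun z => (`|fine (phi (u z))| + 1) * `|g z|.
have k0 z : 0 <= k z by rewrite /k mulr_ge0 // addr_ge0.
have scW : s <= c by exact: ltW.
have fc : {within `[s, c], continuous f}.
  apply: continuous_in_subspaceT => t; rewrite inE /= in_itv /= => /phiP[ct ft _].
  exact: fine_cont.
have intfsc : mu.-integrable `[s, c] (EFin \o f).
  by apply: continuous_compact_integrable => //; exact: segment_compact.
have intf v1 v2 : s <= v1 -> v2 <= c -> mu.-integrable `[v1, v2] (EFin \o f).
  move=> sv1 v2c; apply: integrableS intfsc => //.
  by apply: subset_itvScc; rewrite bnd_simp.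
have f0 t : s <= t <= c -> 0 <= f t.
  by move=> /phiP[_ _ pt]; exact: fine_ge0.
pose Gf v := \int[mu]_(t in `[v, c]) f t.
have Gdiff v1 v2 : s <= v1 -> v1 <= v2 -> v2 <= c ->
    Gf v1 - Gf v2 = \int[mu]_(t in `[v1, v2]) f t.
  move=> sv1 v12 v2c.
  have := Rint_split f v1 v2 c v12 v2c (intf _ _ sv1 (lexx c)).
  rewrite /Gf => <-; lra.
have Gmono v1 v2 : s <= v1 -> v1 <= v2 -> v2 <= c -> Gf v2 <= Gf v1.
  move=> sv1 v12 v2c; have := Gdiff _ _ sv1 v12 v2c.
  have : 0 <= \int[mu]_(t in `[v1, v2]) f t.
    apply: Rintegral_ge0 => t /=; rewrite in_itv /= => /andP[h1 h2].
    by apply: f0; apply/andP; split; lra.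
  lra.
have intk' z1 z2 : 0 <= z1 -> z2 <= x -> mu.-integrable `[z1, z2] (EFin \o k).
  move=> z10 z2x; apply: integrableS intk => //.
  by apply: subset_itvScc; rewrite bnd_simp.
pose w y := clamp s c (u y).
pose H y := - Gf (w y) - \int[mu]_(t in `[0, y]) k t.
have Hstep z1 z2 : 0 <= z1 -> z1 <= z2 -> z2 <= x ->
    Gf (w z1) - Gf (w z2) <= \int[mu]_(t in `[z1, z2]) k t -> H z2 <= H z1.
  move=> z10 z12 z2x.
  have := Rint_split k 0 z1 z2 z10 z12 (intk' _ _ (lexx 0) z2x).
  rewrite /H.
  move: (Gf (w z1)) (Gf (w z2)) (\int[mu]_(t in `[0, z2]) k t)
    (\int[mu]_(t in `[0, z1]) k t) (\int[mu]_(t in `[z1, z2]) k t).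
  clear; move=> a b c d e; lra.
have LOC : forall y, 0 <= y <= x -> exists2 r, 0 < r &
    forall z1 z2, 0 <= z1 -> z1 <= z2 -> z2 <= x -> `|z1 - y| < r -> `|z2 - y| < r ->
      Gf (w z1) - Gf (w z2) <= \int[mu]_(t in `[z1, z2]) k t.
  move=> y /andP[y0 yx].
  have Ay : `[0, x]%classic y by rewrite /= in_itv /= y0 yx.
  have kge z1 z2 : 0 <= \int[mu]_(t in `[z1, z2]) k t by apply: Rintegral_ge0.
  case: (ltP (u y) s) => [uys|suy].
    have e0 : 0 < s - u y by lra.
    have [r r0 Hr] := cu y Ay (s - u y) e0.
    exists r => // z1 z2 z10 z12 z2x d1 d2.
    have wz z : 0 <= z <= x -> `|z - y| < r -> w z = s.
      move=> zx dz; apply: clamp_lo => //.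
      have := Hr z zx dz; have := ler_norm (u z - u y); lra.
    rewrite wz ?z10 ?(le_trans z12 z2x) // wz ?z2x ?(le_trans z10 z12) //.
    by rewrite subrr.
  case: (ltP c (u y)) => [cuy|uyc].
    have e0 : 0 < u y - c by lra.
    have [r r0 Hr] := cu y Ay (u y - c) e0.
    exists r => // z1 z2 z10 z12 z2x d1 d2.
    have wz z : 0 <= z <= x -> `|z - y| < r -> w z = c.
      move=> zx dz; apply: clamp_hi => //.
      have := Hr z zx dz; have := ler_norm (u y - u z); rewrite distrC; lra.
    rewrite wz ?z10 ?(le_trans z12 z2x) // wz ?z2x ?(le_trans z10 z12) //.
    by rewrite subrr.
  set tau := u y.
  have stc : s <= tau <= c by rewrite suy uyc.
  have [ct ft _] := phiP tau stc.
  have h2 : 0 < 1 / 2 :> R by lra.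
  have [rho rho0 Hrho] := at_eps f tau (fine_cont phi tau ct ft) (1 / 2) h2.
  have [r r0 Hr] := cu y Ay rho rho0.
  exists r => // z1 z2 z10 z12 z2x d1 d2.
  have wtau z : `[0, x]%classic z -> `|z - y| < r -> `|w z - tau| < rho.
    move=> zx dz; have := clamp_lip s c (u y) (u z) scW.
    rewrite (clamp_mid s c tau suy uyc) -/tau => h.
    exact: le_lt_trans h (Hr z zx dz).
  have z1in : `[0, x]%classic z1 by rewrite /= in_itv /= z10 (le_trans z12 z2x).
  have z2in : `[0, x]%classic z2 by rewrite /= in_itv /= z2x (le_trans z10 z12).
  have win z : s <= w z <= c by apply: clamp_in.
  have /andP[w1s w1c] := win z1; have /andP[w2s w2c] := win z2.
  case: (leP (w z2) (w z1)) => [w21|w12].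
    have := Gmono _ _ w2s w21 w1c; have := kge z1 z2; lra.
  rewrite Gdiff //; last exact: ltW.
  have ftau : 0 <= f tau by apply: f0.
  have B1 : \int[mu]_(t in `[w z1, w z2]) f t <= (f tau + 1 / 2) * (w z2 - w z1).
    have -> : (f tau + 1 / 2) * (w z2 - w z1) =
        \int[mu]_(t in `[w z1, w z2]) (f tau + 1 / 2).
      rewrite Rintegral_cst //; congr (_ * _).
      have := lebesgue_measure_itv `[w z1, w z2]; rewrite /= lte_fin w12 => ->.
      by [].
    apply: le_Rintegral => //; first exact: intf.
      apply: continuous_compact_integrable; first exact: segment_compact.
      by apply: continuous_subspaceT => ? ; exact: cst_continuous.
    move=> t /=; rewrite in_itv /= => /andP[t1 t2].
    have := wtau z1 z1in d1; have := wtau z2 z2in d2 => h1 h1'.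
    have dt : `|t - tau| < rho.
      rewrite ltr_norml; apply/andP; split.
        have := ler_norm (tau - w z1); rewrite distrC; lra.
      have := ler_norm (w z2 - tau); lra.
    have := Hrho t dt; have := ler_norm (f t - f tau); lra.
  have B2 : w z2 - w z1 <= \int[mu]_(t in `[z1, z2]) `|g t|.
    have := clamp_lip s c (u z1) (u z2) scW; rewrite -/(w z1) -/(w z2).
    have := ulip z1 z2 z10 z12 z2x; have := ler_norm (w z2 - w z1); lra.
  have intg' : mu.-integrable `[z1, z2] (EFin \o (fun t => `|g t|)).
    apply: integrable_norm; apply: integrableS intg => //.
    by apply: subset_itvScc; rewrite bnd_simp.
  have B3 : (f tau + 1 / 2) * \int[mu]_(t in `[z1, z2]) `|g t| <=
      \int[mu]_(t in `[z1, z2]) k t.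
    rewrite -RintegralZl //.
    apply: le_Rintegral => //; last first.
    - move=> t /=; rewrite in_itv /= => /andP[t1 t2].
      have tin : `[0, x]%classic t by rewrite /= in_itv /= (le_trans z10 t1) (le_trans t2 z2x).
      have dt : `|t - y| < r.
        rewrite ltr_norml; apply/andP; split.
          have := ler_norm (y - z1); rewrite distrC; lra.
        have := ler_norm (z2 - y); lra.
      have := Hr t tin dt => hu.
      have := Hrho (u t) hu; have := ler_norm (f (u t)); have := ler_norm (f (u t) - f tau).
      have := ler_norm (f tau - f (u t)); rewrite distrC.
      move=> n0 n1 n2 n3; rewrite /k; apply: ler_wpM2r => //.
      change (fine (phi (u t))) with (f (u t)); lra.
    - exact: intk'.
    - apply: (eq_integrable _ _ _ _ (integrableZl _ (f tau + 1 / 2) intg')) => //.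
  have : (f tau + 1 / 2) * (w z2 - w z1) <=
      (f tau + 1 / 2) * \int[mu]_(t in `[z1, z2]) `|g t|.
    by apply: ler_wpM2l => //; apply: addr_ge0 => //; exact: ltW.
  move: B1 B3; move: (\int[mu]_(t in `[w z1, w z2]) f t) (\int[mu]_(t in `[z1, z2]) k t).
  move: ((f tau + 1 / 2) * (w z2 - w z1)) ((f tau + 1 / 2) * \int[mu]_(t in `[z1, z2]) `|g t|).
  clear; move=> a b c d; lra.
have main : H x <= H 0.
  apply: (@cont_ind R H 0 x x0) => y yx.
  have [r r0 Hr] := LOC y yx.
  case/andP: yx => y0 yx.
  exists r => // z /andP[z0 zx] zy; split=> [zy'|yz].
    apply: Hstep => //; apply: Hr => //; by rewrite subrr normr0.
  apply: Hstep => //; apply: Hr => //; by rewrite subrr normr0.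
move: main; rewrite /H /w u0 (clamp_lo s c 0 scW (ltW s0)) (clamp_hi s c (u x) scW ucx).
rewrite /Gf set_itv1 Rintegral_set1 set_itv1 Rintegral_set1.
lra.
Qed.
End S.
Section S.
Context {R : realType}.
Notation mu := (@lebesgue_measure R).

Lemma step4 (phi : R -> \bar R) (c K : R) : 0 < c ->
  (forall t, 0 < t <= c ->
     [/\ {for t, continuous phi}, phi t \is a fin_num & (0 <= phi t)%E]) ->
  (forall s, 0 < s -> s < c -> \int[mu]_(t in `[s, c]) fine (phi t) <= K) ->
  (\int[mu]_(t in `]0%R, c[) phi t <= K%:E)%E.
Proof.
move=> c0 phiP bnd.
set f := fun t => fine (phi t).
have intf a : 0 < a -> mu.-integrable `[a, c] (EFin \o f).
  move=> a0; apply: continuous_compact_integrable; first exact: segment_compact.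
  apply: continuous_in_subspaceT => t; rewrite inE /= in_itv /= => /andP[hat tc].
  have [ct ft _] := phiP t (introT andP (conj (lt_le_trans a0 hat) tc)).
  exact: fine_cont.
pose a (n : nat) := c / n.+2%:R.
have a0 n : 0 < a n by rewrite /a divr_gt0 // ltr0n.
have ac n : a n < c.
  rewrite /a ltr_pdivrMr ?ltr0n // -[ltLHS]mulr1 ltr_pM2l // ltr1n //.
have ale n m : (n <= m)%N -> a m <= a n.
  move=> nm; rewrite /a ler_pM2l // lef_pV2 ?posrE ?ltr0n // ler_nat ltnS //.
pose A n := `[a n, c[%classic.
pose g' n := (EFin \o f) \_ (A n).
have mD : measurable `]0, c[%classic by [].
have f0 t : 0 < t <= c -> 0 <= f t.
  by move=> /phiP[_ _ pt]; exact: fine_ge0.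
have AD n : A n `<=` `]0, c[%classic.
  move=> t; rewrite /A /= !in_itv /= => /andP[hat tc].
  by rewrite tc (lt_le_trans (a0 n) hat).
rewrite (_ : \int[mu]_(x in `]0%R, c[) phi x = \int[mu]_(x in `]0%R, c[) limn (g'^~ x))%E;
    last first.
  apply: eq_integral => t; rewrite inE /= in_itv /= => /andP[t0 tc].
  have ft : phi t \is a fin_num by have [] := phiP t (introT andP (conj t0 (ltW tc))).
  symmetry; apply: cvg_lim => //.
  apply: cvg_trans (near_eq_cvg (f := fun _ => phi t) (g := g'^~ t) _) _; last exact: cvg_cst.
  have tc0 : 0 < t / c by rewrite divr_gt0.
  near=> n.
  have : n.+1%:R^-1 < (PosNum tc0)%:num by near: n; exact: near_infty_natSinv_lt.
  move=> /= hn.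
  rewrite /g' patchE ifT /= ?fineK //.
  rewrite inE /A /= in_itv /= tc andbT.
  have h1 : c / n.+2%:R <= c / n.+1%:R.
    by rewrite ler_pM2l // lef_pV2 ?posrE ?ltr0n // ler_nat.
  have h2 : c / n.+1%:R < t.
    by rewrite mulrC -ltr_pdivlMr.
  exact: ltW (le_lt_trans h1 h2).
have intA n : mu.-integrable (A n) (EFin \o f).
  rewrite /A; apply: integrableS (intf _ (a0 n)) => //.
  by move=> t; rewrite /= !in_itv /= => /andP[-> /ltW ->].
have mg n : measurable_fun `]0%R, c[ (g' n).
  rewrite /g'; apply/(measurable_restrict (EFin \o f)); [by rewrite /A | by [] |].
  apply: (measurable_funS _ _ (measurable_int _ (intA n))) => //.
  by rewrite /A.
have g'0 n t : (0 <= g' n t)%E.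
  rewrite /g' patchE; case: ifPn => // /set_mem tA.
  rewrite lee_fin; apply: f0; have := AD n t tA.
  by rewrite /= in_itv /= => /andP[-> /ltW ->].
have nd t : {homo g'^~ t : n m / (n <= m)%N >-> (n <= m)%E}.
  move=> n m nm; rewrite /g' [in leLHS]patchE; case: ifPn => [/set_mem tA|_]; last exact: g'0.
  rewrite patchE ifT //; apply/mem_set.
  move: tA; rewrite /A /= !in_itv /= => /andP[h1 ->]; rewrite andbT.
  exact: le_trans (ale _ _ nm) h1.
have intE n : (\int[mu]_(x in `]0%R, c[) g' n x)%E = (\int[mu]_(x in `[a n, c]) f x)%:E.
  rewrite integral_mkcond.
  have -> : (g' n) \_ `]0%R, c[ = g' n.
    apply/funext => t; rewrite /g' !patchE; case: ifPn => //.
    move=> /negP tD; rewrite ifF //; apply/negP => /set_mem tA; apply: tD.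
    exact/mem_set/(AD n t tA).
  rewrite /g' -integral_mkcond.
  rewrite -Rintegral_itv_bndo_bndc //.
  by rewrite /Rintegral fineK // ?integrable_fin_num // -/(A n).
  exact: (intA n).
have MC := monotone_convergence mu mD mg (fun n t _ => g'0 n t) (fun t _ => nd t).
rewrite MC.
apply: lime_le.
  apply: ereal_nondecreasing_is_cvgn => n m nm.
  apply: ge0_le_integral => //; try exact: mg; move=> t _; first [exact: g'0 | exact: nd].
apply: nearW => n; rewrite intE lee_fin; exact: bnd.
Unshelve. all: by end_near.
Qed.
End S.
Section S.
Context {R : realType}.
Notation mu := (@lebesgue_measure R).

Lemma half (phi : R -> \bar R) (u g : R -> R) (L : R) :
  0 < L -> continuous phi -> (forall s, s != 0 -> phi s \is a fin_num) ->
  phi 0 = +oo%E -> u 0 = 0 ->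
  (forall y, `[0, L]%classic y -> forall e, 0 < e -> exists2 r, 0 < r &
     forall z, `[0, L]%classic z -> `|z - y| < r -> `|u z - u y| < e) ->
  (forall y1 y2, 0 <= y1 -> y1 <= y2 -> y2 <= L ->
     `|u y2 - u y1| <= \int[mu]_(t in `[y1, y2]) `|g t|) ->
  mu.-integrable `[0, L] (EFin \o g) ->
  mu.-integrable `[0, L] (EFin \o (fun z => (`|fine (phi (u z))| + 1) * `|g z|)) ->
  (forall c, 0 < c < 1 -> (forall t, 0 < t <= c -> (0 <= phi t)%E) ->
     (\int[mu]_(t in `]0%R, c[) phi t = +oo)%E) ->
  forall x, 0 <= x <= L -> u x <= 0.
Proof.
move=> L0 cphi finphi phi0 u0 cu ulip intg intk Hinf x /andP[x0 xL].
rewrite leNgt; apply/negP => ux.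
have : \forall t \near 0, (0%:E <= phi t)%E.
  have : phi t @[t --> 0] --> +oo%E by rewrite -phi0; exact: cphi.
  by move/cvgeyPger => /(_ 0 (num_real 0)).
move/nbhs_ballP => [r0 /= r00 Hr0].
pose c := Num.min (u x) (Num.min (r0 / 2) (1 / 2)).
have c0 : 0 < c by rewrite !lt_min ux /=; apply/andP; split; lra.
have cux : c <= u x by rewrite ge_min lexx.
have cr : c < r0.
  have : c <= r0 / 2 by rewrite !ge_min lexx orbT.
  lra.
have c1 : c < 1.
  have : c <= 1 / 2 by rewrite !ge_min lexx !orbT.
  lra.
have phipos t : 0 < t <= c ->
    [/\ {for t, continuous phi}, phi t \is a fin_num & (0 <= phi t)%E].
  move=> /andP[t0 tc]; split; first exact: cphi.
    by apply: finphi; rewrite gt_eqF.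
  apply: Hr0; rewrite /ball /= sub0r normrN gtr0_norm //; lra.
have intg' : mu.-integrable `[0, x] (EFin \o g).
  apply: integrableS intg => //; exact: subset_itvScc.
have intk' : mu.-integrable `[0, x]
    (EFin \o (fun z => (`|fine (phi (u z))| + 1) * `|g z|)).
  apply: integrableS intk => //; exact: subset_itvScc.
have bnd s : 0 < s -> s < c -> \int[mu]_(t in `[s, c]) fine (phi t) <=
    \int[mu]_(z in `[0, x]) ((`|fine (phi (u z))| + 1) * `|g z|).
  move=> s0 sc; apply: core => //.
  - move=> t /andP[st tc]; apply: phipos; rewrite tc andbT; lra.
  - move=> y; rewrite /= in_itv /= => /andP[y0 yx] e e0.
    have [r rp Hr] := cu y (introT andP (conj y0 (le_trans yx xL))) e e0.
    exists r => // z; rewrite /= in_itv /= => /andP[z0 zx].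
    by apply: Hr; rewrite /= in_itv /= z0 (le_trans zx xL).
  - move=> y1 y2 y10 y12 y2x; exact: ulip _ _ y10 y12 (le_trans y2x xL).
have := step4 phi c _ c0 phipos bnd.
rewrite Hinf; first by rewrite leNgt ltey.
  by rewrite c0 c1.
by move=> t /phipos[].
Qed.
End S.
Section S.
Context {R : realType}.
Notation mu := (@lebesgue_measure R).

Lemma ge0_int (D : set R) (h : R -> \bar R) : measurable D -> measurable_fun D h ->
  (forall x, D x -> (0 <= h x)%E) -> (\int[mu]_(x in D) h x < +oo)%E ->
  mu.-integrable D h.
Proof.
move=> mD mh h0 hfin; apply/integrableP; split => //.
under eq_integral => x /set_mem xD do rewrite gee0_abs ?h0 //.
exact: hfin.
Qed.

Lemma reflect_int (h : R -> \bar R) (c : R) : measurable_fun `](- c)%R, 0%R[ h ->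
  (forall t, - c < t < 0 -> (0 <= h t)%E) ->
  (\int[mu]_(t in `]0%R, c[) h (- t)%R = \int[mu]_(t in `](- c)%R, 0%R[) h t)%E.
Proof.
move=> mh h0.
have -> : `]0%R, c[%classic = (-%R : _ -> measurableTypeR R) @^-1` `](- c)%R, 0%R[.
  by rewrite opp_preimage_itvbndbnd /= oppr0 opprK.
rewrite -ge0_integral_pushforward //=.
- apply: eq_measure_integral => A mA _; exact: lebesgue_measureN.
- by move=> t /set_mem; rewrite /= in_itv /=; exact: h0.
Qed.

Lemma g_facts (L : R) (u : R -> R) : 0 < L -> H10 L u ->
  exists g : R -> R, [/\ mu.-integrable `[0, L] (EFin \o g),
    measurable_fun `[0, L] g,
    (\int[mu]_(x in `[0%R, L]) (g x * g x)%:E < +oo)%E,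
    (forall y, 0 <= y <= L -> u y = \int[mu]_(t in `[0, y]) g t) &
    u 0 = 0].
Proof.
move=> L0 [g [mg [g2 [repr uL]]]].
have mgg : measurable_fun `[0, L] (fun x => (g x * g x)%:E).
  by apply/measurable_EFinP; exact: measurable_funM.
have intg2 : mu.-integrable `[0, L] (fun x => (g x * g x)%:E).
  apply: ge0_int => // x _; rewrite lee_fin -expr2; exact: sqr_ge0.
have int1 : mu.-integrable `[0, L] (EFin \o (fun _ : R => 1 : R)).
  apply: continuous_compact_integrable; first exact: segment_compact.
  by apply: continuous_subspaceT => ?; exact: cst_continuous.
have intg21 : mu.-integrable `[0, L] (fun x => (g x * g x + 1)%:E).
  apply: (eq_integrable _ _ _ _ (integrableD _ intg2 int1)) => // x _.
have intg : mu.-integrable `[0, L] (EFin \o g).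
  apply: le_integrable intg21 => //; first exact/measurable_EFinP.
  move=> x _ /=; rewrite lee_fin.
  have e : g x * g x = `|g x| * `|g x| by rewrite -normrM ger0_norm // -expr2 sqr_ge0.
  have := normr_ge0 (g x); rewrite e; move: `|g x| => a a0.
  rewrite ger0_norm; first nra.
  by rewrite addr_ge0 // mulr_ge0.
have uR y : 0 <= y <= L -> u y = \int[mu]_(t in `[0, y]) g t.
  by move=> yL; rewrite /Rintegral -repr.
exists g; split => //.
by rewrite uR ?lexx ?(ltW L0) // set_itv1 Rintegral_set1.
Qed.

Lemma u_cont (L : R) (u g : R -> R) : 0 < L -> mu.-integrable `[0, L] (EFin \o g) ->
  (forall y, 0 <= y <= L -> u y = \int[mu]_(t in `[0, y]) g t) ->
  forall y, `[0, L]%classic y -> forall e, 0 < e -> exists2 r, 0 < r &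
     forall z, `[0, L]%classic z -> `|z - y| < r -> `|u z - u y| < e.
Proof.
move=> L0 intg uR y Ay e e0.
have pc := parameterized_integral_continuous (ltW L0) intg.
have [r r0 Hr] := within_eps _ _ y pc Ay e e0.
exists r => // z Az zy.
have := Hr z Az zy; rewrite /parameterized_integral.
move: Ay Az; rewrite /= !in_itv /= => Ay Az.
by rewrite (uR y Ay) (uR z Az).
Qed.

Lemma u_lip (L : R) (u g : R -> R) : mu.-integrable `[0, L] (EFin \o g) ->
  (forall y, 0 <= y <= L -> u y = \int[mu]_(t in `[0, y]) g t) ->
  forall y1 y2, 0 <= y1 -> y1 <= y2 -> y2 <= L ->
     `|u y2 - u y1| <= \int[mu]_(t in `[y1, y2]) `|g t|.
Proof.
move=> intg uR y1 y2 y10 y12 y2L.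
have intg2 : mu.-integrable `[0, y2] (EFin \o g).
  by apply: integrableS intg => //; apply: subset_itvScc; rewrite bnd_simp.
rewrite uR ?y2L ?(le_trans y10 y12) // uR ?y10 ?(le_trans y12 y2L) //.
rewrite (Rint_split g 0 y1 y2 y10 y12 intg2).
apply: le_normr_Rintegral => //.
by apply: integrableS intg2 => //; apply: subset_itvScc; rewrite bnd_simp.
Qed.

Lemma k_int (L : R) (phi : R -> \bar R) (u g : R -> R) :
  measurable_fun `[0, L] g ->
  (\int[mu]_(x in `[0%R, L]) (g x * g x)%:E < +oo)%E ->
  measurable_fun `[0, L] (phi \o u) ->
  (\int[mu]_(x in `[0%R, L]) (phi (u x) * phi (u x)) < +oo)%E ->
  mu.-integrable `[0, L] (EFin \o (fun z => (`|fine (phi (u z))| + 1) * `|g z|)).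
Proof.
move=> mg g2 mphiu phi2.
have mgg : measurable_fun `[0, L] (fun x => (g x * g x)%:E).
  by apply/measurable_EFinP; exact: measurable_funM.
have intg2 : mu.-integrable `[0, L] (fun x => (g x * g x)%:E).
  apply: ge0_int => // x _; rewrite lee_fin -expr2; exact: sqr_ge0.
have int1 : mu.-integrable `[0, L] (EFin \o (fun _ : R => 1 : R)).
  apply: continuous_compact_integrable; first exact: segment_compact.
  by apply: continuous_subspaceT => ?; exact: cst_continuous.
have intp2 : mu.-integrable `[0, L] (fun x => phi (u x) * phi (u x))%E.
  apply: ge0_int => //; first exact: emeasurable_funM.
  by move=> x _; rewrite -expe2 sqre_ge0.
have intS : mu.-integrable `[0, L]
    (fun x => phi (u x) * phi (u x) + ((g x * g x)%:E + 1%:E))%E.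
  apply: integrableD => //; apply: integrableD => //.
apply: le_integrable intS => //.
  apply/measurable_EFinP; apply: measurable_funM.
    apply: measurable_funD => //; apply: measurableT_comp => //.
    exact: measurableT_comp.
  exact: measurableT_comp.
move=> x _ /=.
have e (a : R) : a * a = `|a| * `|a| by rewrite -normrM ger0_norm // -expr2 sqr_ge0.
case: (phi (u x)) => [r| |] /=.
- rewrite lee_fin (e r) (e (g x)).
  have := normr_ge0 r; have := normr_ge0 (g x).
  move: `|r| `|g x| => a b b0 a0.
  rewrite ger0_norm; last by rewrite mulr_ge0 // addr_ge0.
  rewrite ger0_norm; first by have h1 := sqr_ge0 (a - b); have h2 := sqr_ge0 (b - 1); rewrite !expr2 in h1 h2; nra.
  by rewrite !addr_ge0 // mulr_ge0.
- by rewrite leey.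
- by rewrite leey.
Qed.
End S.

Theorem mainTheorem7 (R : realType) (L : R) (phi : R -> \bar R) (u : R -> R) :
  0 < L -> H_phi phi -> phi 0 = +oo%E -> H10 L u -> L2_comp L phi u ->
  ((forall delta : R, 0 < delta < 1 ->
      (\int[lebesgue_measure]_(t in `]0%R, delta[) phi t = +oo)%E) ->
    forall x, 0 <= x <= L -> u x <= 0) /\
  ((forall delta : R, 0 < delta < 1 ->
      (\int[lebesgue_measure]_(t in `](- delta)%R, 0%R[) phi t = +oo)%E) ->
    forall x, 0 <= x <= L -> 0 <= u x).
Proof.
move=> L0 [cphi [_ finphi]] phi0 H10u [mphiu phi2].
have [g [intg mg' g2' uR u0]] := g_facts L u L0 H10u.
have cu := u_cont L u g L0 intg uR.
have ulip := u_lip L u g intg uR.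
have intk := k_int L phi u g mg' g2' mphiu phi2.
split.
  move=> Hinf; apply: (half phi u g L L0 cphi finphi phi0 u0 cu ulip intg intk).
  by move=> c c01 _; exact: Hinf.
move=> Hinf x xL.
rewrite -oppr_le0.
apply: (half (phi \o -%R) (fun y => - u y) g L L0 _ _ _ _ _ _ intg _ _ x xL).
- move=> t; apply: continuous_comp; [exact: oppr_continuous | exact: cphi].
- by move=> s s0; apply: finphi; rewrite oppr_eq0.
- by rewrite /= oppr0.
- by rewrite u0 oppr0.
- move=> y Ay e e0; have [r r0 Hr] := cu y Ay e e0.
  by exists r => // z Az zy; rewrite -opprD normrN; apply: Hr.
- by move=> y1 y2 y10 y12 y2L; rewrite -opprD normrN; exact: ulip.
- apply: (eq_integrable _ _ _ _ intk) => //= z _; by rewrite opprK.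
- move=> c /andP[c0 c1] pos.
  have h0 : forall t, - c < t < 0 -> (0 <= phi t)%E.
    move=> t /andP[t1 t2]; have := pos (- t); rewrite /= opprK; apply.
    by rewrite oppr_gt0 t2 /= lerNl ltW.
  have mh : measurable_fun `](- c)%R, 0%R[ phi.
    pose f := fun t => fine (phi t).
    have cf : {within `](- c)%R, 0%R[, continuous f}.
      apply: continuous_in_subspaceT => t; rewrite inE /= in_itv /= => /andP[t1 t2].
      by apply: fine_cont; [exact: cphi | apply: finphi; rewrite lt_eqF].
    have mf : measurable_fun `](- c)%R, 0%R[ f.
      exact: subspace_continuous_measurable_fun.
    apply: (eq_measurable_fun (EFin \o f)).
      move=> t; rewrite inE /= in_itv /= => /andP[t1 t2].
      by rewrite fineK //; apply: finphi; rewrite lt_eqF.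
    exact/measurable_EFinP.
  change (\int[lebesgue_measure]_(t in `]0%R, c[) phi (- t)%R = +oo)%E.
  rewrite (reflect_int phi c mh h0).
  exact: Hinf (introT andP (conj c0 c1)).
Qed.
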